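(* For every $w\in W^{\mathfrak p}$ the number of arcs of the matching $M(\alpha_w)$ that join a negative point to a positive point is even. Consequently the cup diagram $C(w)$ is defined, and the assignment $w\mapsto C(w)$ is a bijection from $W^{\mathfrak p}$ onto the set $C(W^{\mathfrak p})=\{C(w)\mid w\in W^{\mathfrak p}\}$ (i.e. it is injective).
   Context: Let $n\ge 4$ and let $W$ be the Weyl group of type $D_n$: the Coxeter group on generators $s_0,\dots,s_{n-1}$ with $(s_is_j)^{m_{ij}}=e$, where $m_{ii}=1$, $m_{02}=m_{12}=3$, $m_{i,i+1}=3$ for $2\le i\le n-2$, and $m_{ij}=2$ otherwise. Let $l$ be the length function, $W_{\mathfrak p}=\langle s_1,\dots,s_{n-1}\rangle$, and $W^{\mathfrak p}=\{w\in W\mid l(sw)>l(w)\text{ for all } s\in\{s_1,\dots,s_{n-1}\}\}$ the minimal length representatives of $W_{\mathfrak p}\backslash W$. $W$ acts on the right on $\{+,-\}^n$: $s_i$ ($1\le i\le n-1$) swaps entries $i$ and $i+1$; $s_0$ sends $(a_1,a_2,a_3,\dots,a_n)$ to $(-a_2,-a_1,a_3,\dots,a_n)$. For $w\in W^{\mathfrak p}$ put $(\alpha_1,\dots,\alpha_n)=(+,\dots,+)\cdot w$ and $\alpha_{-i}=-\alpha_i$; the sequence $\alpha_w=(\alpha_{-n},\dots,\alpha_{-1},\alpha_1,\dots,\alpha_n)$. Let $P=\{-2n,\dots,-1,1,\dots,2n\}\subset\mathbb R$. The extended labeling of $P$ attached to $w$ puts $+$ at every $j<-n$, $-$ at every $j>n$,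 and $\alpha_j$ at $j$ with $1\le |j|\le n$. The matching $M(\alpha_w)$ is the (unique) set of $2n$ pairwise non-intersecting arcs in the lower half plane, each point of $P$ an endpoint of exactly one arc, each arc joining a point labeled $+$ to a point labeled $-$ with the $+$ point to the left. The cup diagram $C(w)$: the arcs of $M(\alpha_w)$ joining a negative to a positive point are of the form $(-y,y)$; list them as $y_1<y_2<\dots<y_{2k}$. For each $j=1,\dots,k$ replace the arcs $(-y_{2j-1},y_{2j-1})$ and $(-y_{2j},y_{2j})$ by the two arcs joining $-y_{2j}$ to $y_{2j-1}$ and $-y_{2j-1}$ to $y_{2j}$ (these cross once on the line $x=0$ and are called a linked pair). All other arcs are kept. *)

(* Defs.v *)
From mathcomp Require Import all_boot all_order all_algebra.
Set Implicit Arguments. Unset Strict Implicit. Unset Printing Implicit Defensive.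
Import Order.TTheory GRing.Theory Num.Theory.
Local Open Scope ring_scope.

(* ---------- The Weyl group W of type D_n ----------------------------------
   Elements of W are represented by words in the generators s_0,...,s_{n-1}
   (a word [:: i1; ...; ik] stands for s_{i1} s_{i2} ... s_{ik}).  Two words
   represent the same element of W iff they act identically in the standard
   faithful realisation of D_n by signed permutations of {±1,...,±n}
   (identity on all other integers). *)

Definition gen_perm (n : nat) (i : 'I_n) (j : int) : int :=
  if (i : nat) == 0%N then
    (if j == 1 then -2 else if j == 2 then -1
     else if j == -1 then 2 else if j == -2 then 1 else j)
  else
    let a : int := (i : nat)%:Z in
    (if j == a then a + 1 else if j == a + 1 then a
     else if j == - a then - (a + 1) else if j == - (a + 1) then - a else j).

Definition word_perm (n : nat) (u : seq 'I_n) : int -> int :=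
  foldr (fun i f => gen_perm i \o f) id u.

Definition wequiv (n : nat) (u v : seq 'I_n) : Prop :=
  forall j : int, word_perm u j = word_perm v j.

Definition is_length (n : nat) (u : seq 'I_n) (k : nat) : Prop :=
  (exists t : seq 'I_n, wequiv t u /\ size t = k) /\
  (forall t : seq 'I_n, wequiv t u -> (k <= size t)%N).

Definition in_Wp (n : nat) (u : seq 'I_n) : Prop :=
  forall i : 'I_n, (0 < i)%N ->
  forall k k' : nat, is_length u k -> is_length (i :: u) k' -> (k < k')%N.

(* ---------- Right action of W on {+,-}^n ----------------------------------
   A sign vector is a function nat -> bool on the indices 1..n (true = +). *)
Definition act_gen (n : nat) (i : 'I_n) (a : nat -> bool) : nat -> bool :=
  if (i : nat) == 0%N then
    fun k => if k == 1%N then ~~ a 2%N else if k == 2%N then ~~ a 1%N else a k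
  else
    fun k => if k == (i : nat) then a (i.+1) else if k == (i.+1) then a i else a k.

Definition alpha (n : nat) (u : seq 'I_n) : nat -> bool :=
  foldl (fun a i => act_gen i a) (fun _ => true) u.

Definition inP (n : nat) (j : int) : bool :=
  (j != 0) && (- (2 * n)%:Z <= j) && (j <= (2 * n)%:Z).

Definition ext_label (n : nat) (al : nat -> bool) (j : int) : bool :=
  if j < - n%:Z then true
  else if n%:Z < j then false
  else if 0 < j then al `|j|%N
  else ~~ al `|j|%N.

Definition is_matching (n : nat) (al : nat -> bool) (M : seq (int * int)) : Prop :=
  (forall ab, ab \in M ->
     [/\ inP n ab.1, inP n ab.2, ab.1 < ab.2,
         ext_label n al ab.1 = true & ext_label n al ab.2 = false]) /\
  (forall x, inP n x -> count (fun ab => (ab.1 == x) || (ab.2 == x)) M = 1%N) /\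
  (forall ab cd, ab \in M -> cd \in M ->
     ~ [/\ ab.1 < cd.1, cd.1 < ab.2 & ab.2 < cd.2]).

Definition crossing (ab : int * int) : bool := (ab.1 < 0) && (0 < ab.2).

(* y_1 < ... < y_{2k} : the positive endpoints of the arcs (-y, y) *)
Definition ys (M : seq (int * int)) : seq int :=
  sort (fun x y : int => x <= y) [seq ab.2 | ab <- M & crossing ab].

Definition cup_diagram (M : seq (int * int)) : seq (int * int) :=
  let y := ys M in
  [seq ab <- M | ~~ crossing ab] ++
  flatten [seq [:: (- nth 0 y (2 * j).+1, nth 0 y (2 * j));
                   (- nth 0 y (2 * j), nth 0 y (2 * j).+1)]
          | j <- iota 0 (size y)./2].

(* Main.v *)
Require Import Defs.
From mathcomp Require Import all_boot all_order all_algebra.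
From mathcomp Require Import zify.
Import Order.TTheory GRing.Theory Num.Theory.
Local Open Scope ring_scope.
Set Implicit Arguments.

Section S.
Variable n : nat.
Hypothesis Hn : (4 <= n)%N.
Implicit Types u t : seq 'I_n.

Definition gspec (i : nat) (j g : int) : Prop :=
  (i = 0%N /\ ((j = 1 /\ g = -2) \/ (j = 2 /\ g = -1) \/ (j = -1 /\ g = 2) \/ (j = -2 /\ g = 1)
     \/ ((j <> 1 /\ j <> 2 /\ j <> -1 /\ j <> -2) /\ g = j))) \/
  ((0 < i)%N /\ ((j = i%:Z /\ g = i%:Z + 1) \/ (j = i%:Z + 1 /\ g = i%:Z) \/
      (j = - i%:Z /\ g = - (i%:Z + 1)) \/ (j = - (i%:Z + 1) /\ g = - i%:Z) \/
      ((j <> i%:Z /\ j <> i%:Z + 1 /\ j <> - i%:Z /\ j <> - (i%:Z + 1)) /\ g = j))).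

Lemma gpS (i : 'I_n) j : gspec i j (gen_perm i j).
Proof.
rewrite /gen_perm /gspec; case: ifP => /eqP Hi.
  by left; split=> //; repeat (case: eqP => ?); lia.
by right; split; [lia|]; repeat (case: eqP => ?); lia.
Qed.

Lemma gp_inv (i : 'I_n) j : gen_perm i (gen_perm i j) = j.
Proof. have := gpS i j; have := gpS i (gen_perm i j); rewrite /gspec; lia. Qed.

Lemma gp_odd (i : 'I_n) j : gen_perm i (- j) = - gen_perm i j.
Proof. have := gpS i j; have := gpS i (- j); rewrite /gspec; lia. Qed.

Lemma gp_out (i : 'I_n) j : (j = 0 \/ n%:Z < j \/ j < - n%:Z) -> gen_perm i j = j.
Proof. have := ltn_ord i; have := gpS i j; rewrite /gspec; lia. Qed.

Lemma gp_in (i : 'I_n) j : (j <> 0 /\ - n%:Z <= j <= n%:Z) ->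
  (gen_perm i j <> 0 /\ - n%:Z <= gen_perm i j <= n%:Z).
Proof. have := ltn_ord i; have := gpS i j; rewrite /gspec; lia. Qed.

Lemma gp_sign (i : 'I_n) j : (0 < i)%N -> (0 < gen_perm i j) = (0 < j).
Proof. move=> h; have := gpS i j; rewrite /gspec => ?; apply/idP/idP; lia. Qed.


Lemma wp_cons (i : 'I_n) u x : word_perm (i :: u) x = gen_perm i (word_perm u x).
Proof. by []. Qed.

Lemma wp_rcons (i : 'I_n) u x : word_perm (rcons u i) x = word_perm u (gen_perm i x).
Proof. by elim: u => [|j u IH] //=; rewrite /= -IH. Qed.

Lemma wp_rev u x : word_perm (rev u) (word_perm u x) = x.
Proof.
elim: u x => [|i u IH] x //=.
by rewrite rev_cons wp_rcons gp_inv IH.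
Qed.

Lemma wp_rev2 u x : word_perm u (word_perm (rev u) x) = x.
Proof. by have := wp_rev (rev u) x; rewrite revK. Qed.

Lemma wp_odd u x : word_perm u (- x) = - word_perm u x.
Proof. by elim: u x => [|i u IH] x //=; rewrite IH gp_odd. Qed.

Lemma wp_out u j : (j = 0 \/ n%:Z < j \/ j < - n%:Z) -> word_perm u j = j.
Proof. by elim: u => [|i u IH] //= h; rewrite IH // gp_out. Qed.

Lemma wp_in u j : (j <> 0 /\ - n%:Z <= j <= n%:Z) ->
  (word_perm u j <> 0 /\ - n%:Z <= word_perm u j <= n%:Z).
Proof. by elim: u => [|i u IH] //= h; apply: gp_in; apply: IH. Qed.

Lemma act_genE (i : 'I_n) (a : nat -> bool) t (k : nat) :
  (forall k, (1 <= k <= n)%N -> a k = (0 < word_perm t k%:Z)) ->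
  (1 <= k <= n)%N -> act_gen i a k = (0 < word_perm t (gen_perm i k%:Z)).
Proof.
move=> ha hk; have hi := ltn_ord i.
have nz : forall m : nat, (1 <= m <= n)%N -> word_perm t m%:Z <> 0.
  by move=> m hm; have := @wp_in t m%:Z; lia.
have := gpS i k%:Z; rewrite /gspec /act_gen.
case: ifP => /eqP Hi.
  case: eqP => [->|k1].
    move=> h; have -> : gen_perm i 1%:Z = - 2%:Z by lia.
    rewrite wp_odd ha; last lia.
    have := nz 2%N; case: ltrgt0P => //=; lia.
  case: eqP => [->|k2].
    move=> h; have -> : gen_perm i 2%:Z = - 1%:Z by lia.
    rewrite wp_odd ha; last lia.
    have := nz 1%N; case: ltrgt0P => //=; lia.
  move=> h; have -> : gen_perm i k%:Z = k%:Z by lia.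
  by rewrite ha.
case: eqP => [->|k1].
  move=> h; have -> : gen_perm i i%:Z = (i.+1)%:Z by lia.
  by rewrite ha //; lia.
case: eqP => [->|k2].
  move=> h; have -> : gen_perm i (i.+1)%:Z = i%:Z by lia.
  by rewrite ha //; lia.
move=> h; have -> : gen_perm i k%:Z = k%:Z by lia.
by rewrite ha.
Qed.

Lemma alpha_gen u t (a : nat -> bool) :
  (forall k, (1 <= k <= n)%N -> a k = (0 < word_perm t k%:Z)) ->
  forall k, (1 <= k <= n)%N ->
  foldl (fun a i => act_gen i a) a u k = (0 < word_perm (t ++ u) k%:Z).
Proof.
elim: u t a => [|i u IH] t a ha k hk /=; first by rewrite cats0 ha.
rewrite -cat_rcons; apply: IH => // m hm.
by rewrite wp_rcons; apply: act_genE.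
Qed.

Lemma alphaE u k : (1 <= k <= n)%N -> alpha u k = (0 < word_perm u k%:Z).
Proof.
move=> hk; have := @alpha_gen u [::] (fun _ => true); rewrite cat0s /alpha.
apply=> // m hm /=; apply/esym; lia.
Qed.


Definition phi (a b : int) : nat := (nat_of_bool (b < a)%R + nat_of_bool (a + b < 0)%R)%N.

Definition m1 (i : nat) : int := if (i == 0)%N then 1 else i%:Z.

Lemma m1E (i : nat) : (i = 0%N /\ m1 i = 1) \/ ((0 < i)%N /\ m1 i = i%:Z).
Proof. rewrite /m1; case: eqP; lia. Qed.

Definition inR (x : int) := x <> 0 /\ - n%:Z <= x <= n%:Z.

Ltac gdest i x := let H := fresh in have H := gpS i x; rewrite /gspec in H;
  decompose [or and] H; clear H.

Lemma phi_same (i : 'I_n) a b : inR a -> inR b -> a <> b -> a <> - b ->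
  ~ (((a = m1 i \/ a = - m1 i) /\ (b = m1 i + 1 \/ b = - (m1 i + 1))) \/
     ((b = m1 i \/ b = - m1 i) /\ (a = m1 i + 1 \/ a = - (m1 i + 1)))) ->
  phi (gen_perm i a) (gen_perm i b) = phi a b.
Proof.
rewrite /inR => ha hb hab hab' hs.
have hi := ltn_ord i.
have [[Hi Hm]|[Hi Hm]] := m1E i; rewrite Hm in hs.
  have e1 : (gen_perm i b < gen_perm i a) = (b < a).
    gdest i a; gdest i b; apply/idP/idP; lia.
  have e2 : (gen_perm i a + gen_perm i b < 0) = (a + b < 0).
    gdest i a; gdest i b; apply/idP/idP; lia.
  by rewrite /phi e1 e2.
have e1 : (gen_perm i b < gen_perm i a) = (b < a).
  gdest i a; gdest i b; apply/idP/idP; lia.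
have e2 : (gen_perm i a + gen_perm i b < 0) = (a + b < 0).
  gdest i a; gdest i b; apply/idP/idP; lia.
by rewrite /phi e1 e2.
Qed.


End S.


Section S.
Variable n : nat.
Hypothesis Hn : (4 <= n)%N.
Implicit Types u t : seq 'I_n.
Ltac gdest i x := let H := fresh in have H := gpS Hn i x; rewrite /gspec in H;
  decompose [or and] H; clear H.

Definition Cspec (i : nat) (a b : int) : Prop :=
  (i = 0%N /\ 0 < b) \/ ((0 < i)%N /\ (a = m1 i \/ a = - m1 i) /\ 0 < b) \/
  ((0 < i)%N /\ (a = m1 i + 1 \/ a = - (m1 i + 1)) /\ b < 0).

Ltac phi_tac a b ga gb :=
  rewrite /phi; case: (boolP (b < a)); case: (boolP (gb < ga));
  case: (boolP (a + b < 0)); case: (boolP (ga + gb < 0)) => /= ? ? ? ?.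

Lemma phi_special (i : 'I_n) a b : inR n a -> inR n b ->
  ((a = m1 i \/ a = - m1 i) /\ (b = m1 i + 1 \/ b = - (m1 i + 1))) \/
  ((b = m1 i \/ b = - m1 i) /\ (a = m1 i + 1 \/ a = - (m1 i + 1))) ->
  (Cspec i a b -> phi (gen_perm i a) (gen_perm i b) = (phi a b).+1) /\
  (~ Cspec i a b -> phi a b = (phi (gen_perm i a) (gen_perm i b)).+1).
Proof.
rewrite /inR /Cspec => ha hb hs.
have hi := ltn_ord i.
have [[Hi Hm]|[Hi Hm]] := m1E n Hn i; rewrite Hm in hs *.
  gdest i a; gdest i b; try (exfalso; lia);
    split=> hC; phi_tac a b (gen_perm i a) (gen_perm i b); lia.
gdest i a; gdest i b; try (exfalso; lia);
split=> hC; phi_tac a b (gen_perm i a) (gen_perm i b); lia.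
Qed.

End S.

Section S.
Variable n : nat.
Hypothesis Hn : (4 <= n)%N.
Implicit Types u t : seq 'I_n.

Let vf u x := @wp_rev n Hn u x.
Let fv u x := @wp_rev2 n Hn u x.
Let wodd u x := @wp_odd n Hn u x.
Let win u x := @wp_in n Hn u x.

Definition Lf (f : int -> int) : nat :=
  \sum_(pq : 'I_n * 'I_n | (pq.1 < pq.2)%N)
     phi (f ((nat_of_ord pq.1).+1)%:Z) (f ((nat_of_ord pq.2).+1)%:Z).

Definition incb (i : nat) (v : int -> int) : bool :=
  if (i == 0)%N then 0 < v (m1 i) + v (m1 i + 1) else v (m1 i) < v (m1 i + 1).

Lemma Lf_step (i : 'I_n) u :
  (incb i (word_perm (rev u)) -> Lf (word_perm (i :: u)) = (Lf (word_perm u)).+1) /\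
  (~~ incb i (word_perm (rev u)) -> Lf (word_perm u) = (Lf (word_perm (i :: u))).+1).
Proof.
have hi := ltn_ord i.
have hm := m1E n Hn i.
set f := word_perm u; set v := word_perm (rev u).
have Hfv : forall x, f (v x) = x by move=> x; apply: fv.
have Hvf : forall x, v (f x) = x by move=> x; apply: vf.
have Hfo : forall x, f (- x) = - f x by move=> x; apply: wodd.
have Hvo : forall x, v (- x) = - v x by move=> x; apply: wodd.
have Hfi : forall x, inR n x -> inR n (f x) by move=> x; apply: win.
have Hvi : forall x, inR n x -> inR n (v x) by move=> x; apply: win.
have key : forall y (P : int), f P = y \/ f P = - y -> v y = P \/ v y = - P.
  move=> y P [<-|e]; first by left.
  by right; have -> : y = f (- P) by rewrite Hfo e opprK.
set x1 := v (m1 i); set x2 := v (m1 i + 1).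
have r1 : inR n x1 by apply: Hvi; rewrite /inR; lia.
have r2 : inR n x2 by apply: Hvi; rewrite /inR; lia.
have F1 : f x1 = m1 i by rewrite Hfv.
have F2 : f x2 = m1 i + 1 by rewrite Hfv.
set P1 := `|x1|%N; set P2 := `|x2|%N.
have A1 : (0 < x1 /\ f P1%:Z = m1 i) \/ (x1 < 0 /\ f P1%:Z = - m1 i).
  case: (ltrgt0P x1) => h.
  - left; split; first done.
    have -> : P1%:Z = x1 by rewrite /P1; lia.
    exact: F1.
  - right; split; first done.
    have -> : P1%:Z = - x1 by rewrite /P1; lia.
    by rewrite Hfo F1.
  - by exfalso; move: r1; rewrite /inR; lia.
have A2 : (0 < x2 /\ f P2%:Z = m1 i + 1) \/ (x2 < 0 /\ f P2%:Z = - (m1 i + 1)).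
  case: (ltrgt0P x2) => h.
  - left; split; first done.
    have -> : P2%:Z = x2 by rewrite /P2; lia.
    exact: F2.
  - right; split; first done.
    have -> : P2%:Z = - x2 by rewrite /P2; lia.
    by rewrite Hfo F2.
  - by exfalso; move: r2; rewrite /inR; lia.
have P12 : P1 <> P2.
  move=> e; have : (x1 = x2 \/ x1 = - x2) by lia.
  case=> e'; move: F1 F2; rewrite e' ?Hfo; lia.
have h1 : ((minn P1 P2).-1 < n)%N by move: r1 r2; rewrite /inR; lia.
have h2 : ((maxn P1 P2).-1 < n)%N by move: r1 r2; rewrite /inR; lia.
pose s : 'I_n * 'I_n := (Ordinal h1, Ordinal h2).
have hs : (s.1 < s.2)%N by rewrite /=; lia.
have E1 : ((nat_of_ord s.1).+1)%:Z = (minn P1 P2)%:Z by rewrite /=; move: r1 r2; rewrite /inR; lia.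
have E2 : ((nat_of_ord s.2).+1)%:Z = (maxn P1 P2)%:Z by rewrite /=; move: r1 r2; rewrite /inR; lia.
have Lcons : Lf (word_perm (i :: u)) = \sum_(pq : 'I_n * 'I_n | (pq.1 < pq.2)%N)
     phi (gen_perm i (f ((nat_of_ord pq.1).+1)%:Z)) (gen_perm i (f ((nat_of_ord pq.2).+1)%:Z)) by [].
have rest : \sum_(pq : 'I_n * 'I_n | (pq.1 < pq.2)%N && (pq != s))
     phi (gen_perm i (f ((nat_of_ord pq.1).+1)%:Z)) (gen_perm i (f ((nat_of_ord pq.2).+1)%:Z)) =
   \sum_(pq : 'I_n * 'I_n | (pq.1 < pq.2)%N && (pq != s))
     phi (f ((nat_of_ord pq.1).+1)%:Z) (f ((nat_of_ord pq.2).+1)%:Z).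
  clear A1 A2 E1 E2 hs Lcons.
  apply: eq_bigr => [[p q]] /andP [/= hpq hne].
  have hp := ltn_ord p; have hq := ltn_ord q.
  have ra : inR n (f (p.+1)%:Z) by apply: Hfi; rewrite /inR; lia.
  have rb : inR n (f (q.+1)%:Z) by apply: Hfi; rewrite /inR; lia.
  have va : v (f (p.+1)%:Z) = (p.+1)%:Z by rewrite Hvf.
  have vb : v (f (q.+1)%:Z) = (q.+1)%:Z by rewrite Hvf.
  apply: phi_same => //.
  - by move=> e; move: va; rewrite e vb; lia.
  - by move=> e; have := Hvo (f (q.+1)%:Z); rewrite -e va vb; lia.
  move=> H; move/negP: hne; apply; apply/eqP.
  have [[K1 K2]|[K1 K2]] : (((x1 = (p.+1)%:Z \/ x1 = - (p.+1)%:Z) /\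
                             (x2 = (q.+1)%:Z \/ x2 = - (q.+1)%:Z)) \/
                            ((x1 = (q.+1)%:Z \/ x1 = - (q.+1)%:Z) /\
                             (x2 = (p.+1)%:Z \/ x2 = - (p.+1)%:Z))).
  - case: H => [[Ha Hb]|[Hb Ha]].
    + left; split; apply: key.
      * exact: Ha.
      * exact: Hb.
    + right; split; apply: key.
      * exact: Hb.
      * exact: Ha.
  - clear -K1 K2 hpq hp hq.
    by congr pair; apply: val_inj => /=; rewrite /P1 /P2; lia.
  - clear -K1 K2 hpq hp hq.
    by congr pair; apply: val_inj => /=; rewrite /P1 /P2; lia.
have e' := Lcons; rewrite (bigD1 s hs) rest E1 E2 in e'.
have e : Lf f = phi (f (minn P1 P2)%:Z) (f (maxn P1 P2)%:Z) +
   \sum_(pq : 'I_n * 'I_n | (pq.1 < pq.2)%N && (pq != s))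
     phi (f ((nat_of_ord pq.1).+1)%:Z) (f ((nat_of_ord pq.2).+1)%:Z).
  by rewrite /Lf (bigD1 s hs) E1 E2.
rewrite e' e; clear e e' rest Lcons.
set a := f (minn P1 P2)%:Z; set b := f (maxn P1 P2)%:Z.
have ra : inR n a by apply: Hfi; move: r1 r2; rewrite /inR; lia.
have rb : inR n b by apply: Hfi; move: r1 r2; rewrite /inR; lia.
have [HS HC] : (((a = m1 i \/ a = - m1 i) /\ (b = m1 i + 1 \/ b = - (m1 i + 1))) \/
  ((b = m1 i \/ b = - m1 i) /\ (a = m1 i + 1 \/ a = - (m1 i + 1)))) /\
  (Cspec i a b <-> incb i v).
  clear E1 E2 hs.
  have Pr1 : P1%:Z = `|x1|%N%:Z by [].
  have Pr2 : P2%:Z = `|x2|%N%:Z by [].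
  rewrite /a /b /incb /Cspec -/x1 -/x2.
  case: (ltnP P1 P2) => hlt.
    case: A1 => [[s1 ->]|[s1 ->]]; case: A2 => [[s2 ->]|[s2 ->]];
    (split; first by intuition); case: eqP => Hi; split; move: r1 r2; rewrite /inR; lia.
  case: A1 => [[s1 ->]|[s1 ->]]; case: A2 => [[s2 ->]|[s2 ->]];
  (split; first by intuition); case: eqP => Hi; split; move: r1 r2; rewrite /inR; lia.
have [Pinc Pdec] := phi_special Hn i ra rb HS.
split=> hinc.
  by rewrite (Pinc (proj2 HC hinc)); apply: addSn.
have nC : ~ Cspec i a b by move=> /HC; apply/negP.
by rewrite (Pdec nC); apply: addSn.
Qed.

End S.


Section S.
Variable n : nat.
Hypothesis Hn : (4 <= n)%N.
Implicit Types u t : seq 'I_n.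

Let vf u x := @wp_rev n Hn u x.
Let fv u x := @wp_rev2 n Hn u x.
Let wodd u x := @wp_odd n Hn u x.
Let win u x := @wp_in n Hn u x.
Let wout u x := @wp_out n Hn u x.

Lemma Lf_ext (f g : int -> int) : f =1 g -> Lf n f = Lf n g.
Proof. by move=> e; apply: eq_bigr => pq _; rewrite !e. Qed.

Lemma Lf_id : Lf n id = 0%N.
Proof.
apply: big1 => [[p q]] /= hpq; rewrite /phi.
have -> : (q.+1%:Z < p.+1%:Z) = false by apply/negbTE; lia.
have -> : (p.+1%:Z + q.+1%:Z < 0) = false by apply/negbTE; lia.
by [].
Qed.

Lemma Lf_le t : (Lf n (word_perm t) <= size t)%N.
Proof.
elim: t => [|i t IH]; first by rewrite Lf_id.
have [h1 h2] := Lf_step Hn i t.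
rewrite [size _]/=.
case: (boolP (incb i (word_perm (rev t)))) => h.
  by rewrite (h1 h).
have := h2 h; lia.
Qed.

Definition negc (h : int -> int) : nat := count (fun k : nat => h k%:Z < 0) (iota 1 n).

Lemma negc_even (s : seq 'I_n) : ~~ odd (negc (word_perm s)).
Proof.
elim/last_ind: s => [|s i IH].
  rewrite /negc (@eq_in_count _ _ pred0); first by rewrite count_pred0.
  move=> k hk; move: hk; rewrite mem_iota => hk /=; apply/negbTE; lia.
have hi := ltn_ord i.
pose m := if (i == 0%N :> nat) then 1%N else nat_of_ord i.
have hm : (1 <= m)%N /\ (m.+1 <= n)%N /\ ((i == 0%N :> nat) -> m = 1%N) /\
          (~~ (i == 0%N :> nat) -> m = i) by rewrite /m; case: eqP => /=; lia.
have sp : iota 1 n = iota 1 (m - 1) ++ [:: m; m.+1] ++ iota m.+2 (n - m.+1).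
  have e : n = ((m - 1) + (n - m.+1).+2)%N by lia.
  rewrite {1}e iotaD; congr (_ ++ _).
  have -> : (1 + (m - 1))%N = m by lia.
  by [].
move: IH; rewrite /negc sp !count_cat.
set h := word_perm s.
have W : forall x, word_perm (rcons s i) x = h (gen_perm i x) by move=> x; apply: wp_rcons.
have e1 : count (fun k : nat => word_perm (rcons s i) k%:Z < 0) (iota 1 (m - 1)) =
          count (fun k : nat => h k%:Z < 0) (iota 1 (m - 1)).
  apply: eq_in_count => k hk; move: hk; rewrite mem_iota => hk /=; rewrite W; congr (_ < 0); congr h.
  have := gpS Hn i k%:Z; rewrite /gspec; lia.
have e3 : count (fun k : nat => word_perm (rcons s i) k%:Z < 0) (iota m.+2 (n - m.+1)) =
          count (fun k : nat => h k%:Z < 0) (iota m.+2 (n - m.+1)).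
  apply: eq_in_count => k hk; move: hk; rewrite mem_iota => hk /=; rewrite W;
    congr (_ < 0); congr h.
  have := gpS Hn i k%:Z; rewrite /gspec; lia.
rewrite e1 e3 /= !W.
have nz : forall k : nat, (1 <= k <= n)%N -> h k%:Z != 0.
  move=> k hk; have := @wp_in n Hn s k%:Z; rewrite -/h => H; apply/eqP; lia.
have sg : forall x : int, x != 0 -> (0 < x) = ~~ (x < 0).
  by move=> x; case: ltrgt0P.
case: (eqVneq (nat_of_ord i) 0%N) => Hi.
  have [Hm1 Hm2] : gen_perm i m%:Z = - 2%:Z /\ gen_perm i m.+1%:Z = - 1%:Z.
    by have := gpS Hn i m%:Z; have := gpS Hn i m.+1%:Z; rewrite /gspec; lia.
  have ho : forall x, h (- x) = - h x by move=> x; apply: wodd.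
  rewrite Hm1 Hm2 !ho !oppr_lt0 !sg ?nz; try lia.
  have -> : m = 1%N by lia.
  move: (h 1%:Z < 0) (h 2%:Z < 0) => b1 b2.
  by rewrite !oddD; case: b1; case: b2.
have [Hm1 Hm2] : gen_perm i m%:Z = m.+1%:Z /\ gen_perm i m.+1%:Z = m%:Z.
  by have := gpS Hn i m%:Z; have := gpS Hn i m.+1%:Z; rewrite /gspec; lia.
rewrite Hm1 Hm2.
move: (h m%:Z < 0) (h m.+1%:Z < 0) => b1 b2.
by rewrite !oddD; case: b1; case: b2.
Qed.


Lemma no_descent u : (forall i : 'I_n, incb i (word_perm (rev u))) ->
  forall x, word_perm u x = x.
Proof.
move=> H.
set f := word_perm u; set v := word_perm (rev u).
have Hfv : forall x, f (v x) = x by move=> x; apply: fv.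
have Hvf : forall x, v (f x) = x by move=> x; apply: vf.
have Hfo : forall x, f (- x) = - f x by move=> x; apply: wodd.
have Hvi : forall k : nat, (1 <= k <= n)%N -> v k%:Z <> 0 /\ - n%:Z <= v k%:Z <= n%:Z.
  by move=> k hk; apply: win; lia.
have inc : forall k : nat, (1 <= k)%N -> (k < n)%N -> v k%:Z < v k.+1%:Z.
  move=> k h1 h2; move: (H (Ordinal h2)); rewrite /incb /m1 /=.
  have -> : (k == 0)%N = false by apply/negbTE; lia.
  by have -> : k%:Z + 1 = k.+1%:Z by lia.
have n0 : (0 < n)%N by lia.
have i0 : 0 < v 1%:Z + v 2%:Z.
  by move: (H (Ordinal n0)); rewrite /incb /m1 /= (_ : 1 + 1 = 2%:Z).
have chain : forall k j : nat, (1 <= k)%N -> (k <= j)%N -> (j <= n)%N ->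
    v k%:Z + (j%:Z - k%:Z) <= v j%:Z.
  move=> k j hk; elim: j => [|j IH] hkj hjn; first lia.
  case: (eqVneq k j.+1) => [->|ne]; first lia.
  have := IH ltac:(lia) ltac:(lia); have := inc j ltac:(lia) ltac:(lia); lia.
have v2 : 2%:Z <= v 2%:Z.
  have := inc 1%N isT ltac:(lia); have := Hvi 1%N ltac:(lia); move: i0; lia.
have vk : forall k : nat, (2 <= k <= n)%N -> v k%:Z = k%:Z.
  move=> k hk; have := chain 2%N k isT ltac:(lia) ltac:(lia).
  have := chain k n ltac:(lia) ltac:(lia) (leqnn n); have := Hvi n ltac:(lia).
  move: v2; lia.
have v1 : v 1%:Z = 1%:Z \/ v 1%:Z = - 1%:Z.
  have := Hvi 1%N ltac:(lia) => r.
  set j := `|v 1%:Z|%N.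
  have hj : (1 <= j <= n)%N by rewrite /j; lia.
  case: (ltnP j 2) => hj2; first by rewrite /j in hj2; lia.
  have vj := vk j ltac:(lia).
  have : v 1%:Z = v j%:Z \/ v 1%:Z = - v j%:Z by rewrite vj /j; lia.
  case=> e.
  - by have := Hfv 1%:Z; rewrite e Hfv; lia.
  - have e2 : v (- j%:Z) = - v j%:Z by apply: wodd.
    by have := Hfv 1%:Z; rewrite e -e2 Hfv; lia.
have vid : forall k : nat, (1 <= k <= n)%N -> v k%:Z = k%:Z.
  move=> k hk; case: (eqVneq k 1%N) => [->|ne]; last by apply: vk; lia.
  case: v1 => // e; exfalso.
  have := negc_even (rev u); rewrite /negc -/v.
  have -> : iota 1 n = 1%N :: iota 2 (n - 1) by case: n n0 Hn => //= n' _ _; rewrite subn1.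
  rewrite /= e (_ : count _ _ = 0%N) //.
  rewrite (@eq_in_count _ _ pred0) ?count_pred0 // => k' hk'; move: hk'.
  rewrite mem_iota => hk' /=; rewrite vk; [apply/negbTE; lia | lia].
move=> x.
have [hx|[hx|hx]] : (x = 0 \/ n%:Z < x \/ x < - n%:Z) \/
   (1 <= x <= n%:Z) \/ (- n%:Z <= x <= -1) by lia.
- by apply: wout.
- have -> : x = `|x|%N%:Z by lia.
  by rewrite -{1}(vid `|x|%N) ?Hfv //; lia.
- have -> : x = - `|x|%N%:Z by lia.
  by rewrite Hfo -{1}(vid `|x|%N) ?Hfv //; lia.
Qed.

Lemma word_exists u : exists t, wequiv t u /\ size t = Lf n (word_perm u).
Proof.
have [N hN] : exists N, Lf n (word_perm u) = N by eexists.
elim: N u hN => [|N IH] u hN.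
  case: (pickP (fun i : 'I_n => ~~ incb i (word_perm (rev u)))) => [i hi|none].
    by have := (Lf_step Hn i u).2 hi; rewrite hN.
  exists [::]; split; last by rewrite hN.
  move=> j; rewrite (@no_descent u) //= => i; exact: (negbFE (none i)).
case: (pickP (fun i : 'I_n => ~~ incb i (word_perm (rev u)))) => [i hi|none].
  have := (Lf_step Hn i u).2 hi; rewrite hN => [[hN']].
  have [t' [ht' st']] := IH (i :: u) (esym hN').
  exists (i :: t'); split; last by rewrite /= st' hN'.
  by move=> j; rewrite wp_cons ht' wp_cons (gp_inv Hn).
have : Lf n (word_perm u) = Lf n id.
  by apply: Lf_ext => x; rewrite (@no_descent u) // => i; exact: (negbFE (none i)).
by rewrite hN Lf_id.
Qed.

Lemma is_len u : is_length u (Lf n (word_perm u)).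
Proof.
split; first by have [t [h1 h2]] := word_exists u; exists t.
move=> t ht; rewrite -(Lf_ext ht); exact: Lf_le.
Qed.

Lemma is_len_uniq u k : is_length u k -> k = Lf n (word_perm u).
Proof.
move=> [[t [ht st]] hmin].
have [t0 [h0 s0]] := word_exists u.
have := hmin t0 h0; have := Lf_le t; rewrite (Lf_ext ht); lia.
Qed.

Lemma inWp_inc u : in_Wp u -> forall i : 'I_n, (0 < i)%N -> incb i (word_perm (rev u)).
Proof.
move=> hw i hi; apply/negPn/negP => hd.
have := (Lf_step Hn i u).2 hd.
have := hw i hi _ _ (is_len u) (is_len (i :: u)); lia.
Qed.

End S.


Section S.
Variable n : nat.
Hypothesis Hn : (4 <= n)%N.
Implicit Types u t : seq 'I_n.

Let vf u x := @wp_rev n Hn u x.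
Let fv u x := @wp_rev2 n Hn u x.
Let wodd u x := @wp_odd n Hn u x.
Let win u x := @wp_in n Hn u x.
Let wout u x := @wp_out n Hn u x.

Lemma incv u : in_Wp u -> forall k : nat, (1 <= k)%N -> (k < n)%N ->
  word_perm (rev u) k%:Z < word_perm (rev u) k.+1%:Z.
Proof.
move=> hw k h1 h2; move: (inWp_inc Hn hw (Ordinal h2) h1); rewrite /incb /m1 /=.
have -> : (k == 0)%N = false by apply/negbTE; lia.
by have -> : k%:Z + 1 = k.+1%:Z by lia.
Qed.

Lemma sorted_v (v : int -> int) m a :
  (forall k : nat, (a <= k)%N -> (k.+1 < a + m)%N -> v k%:Z < v k.+1%:Z) ->
  sorted <%O (map (fun k : nat => v k%:Z) (iota a m)).
Proof.
rewrite sorted_map.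
elim: m a => [|m IH] a h //=.
case: m IH h => [|m] IH h //=.
apply/andP; split; first by apply: h; lia.
by apply: (IH a.+1) => k h1 h2; apply: h; lia.
Qed.

Lemma mem_v u x : (x \in map (fun k : nat => word_perm (rev u) k%:Z) (iota 1 n)) =
  [&& x != 0, - n%:Z <= x, x <= n%:Z & 0 < word_perm u x].
Proof.
apply/mapP/idP.
  move=> [k]; rewrite mem_iota => hk ->.
  have := win (rev u) (x := k%:Z); rewrite fv => H.
  apply/and4P; split; try lia.
move/and4P => [h1 h2 h3 h4].
have := win u (x := x) => H.
exists `|word_perm u x|%N.
  by rewrite mem_iota; move/eqP: h1 => h1; lia.
have -> : `|word_perm u x|%N%:Z = word_perm u x by lia.
by rewrite vf.
Qed.

Lemma unique_Wp u u' : in_Wp u -> in_Wp u' ->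
  (forall k : nat, (1 <= k <= n)%N -> (0 < word_perm u k%:Z) = (0 < word_perm u' k%:Z)) ->
  wequiv u u'.
Proof.
move=> hu hu' hs.
set f := word_perm u; set f' := word_perm u'.
set v := word_perm (rev u); set v' := word_perm (rev u').
have S1 : sorted <%O (map (fun k : nat => v k%:Z) (iota 1 n)).
  by apply: sorted_v => k h1 h2; apply: (incv hu); lia.
have S2 : sorted <%O (map (fun k : nat => v' k%:Z) (iota 1 n)).
  by apply: sorted_v => k h1 h2; apply: (incv hu'); lia.
have sgx : forall x, x != 0 -> (0 < f x) = (0 < f' x).
  move=> x /eqP hx.
  have [hp|hneg] : 0 < x \/ x < 0 by lia.
    have -> : x = `|x|%N%:Z by lia.
    case: (leqP `|x|%N n) => hxn; first by apply: hs; lia.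
    by rewrite /f /f' !wout //; lia.
  have -> : x = - `|x|%N%:Z by lia.
  rewrite /f /f' !wodd !oppr_gt0.
  case: (leqP `|x|%N n) => hxn; last by rewrite !wout //; lia.
  have := hs `|x|%N ltac:(lia).
  have := win u (x := `|x|%N%:Z); have := win u' (x := `|x|%N%:Z).
  move=> H1 H2; case: ltrgt0P; case: ltrgt0P => //=; lia.
have E : map (fun k : nat => v k%:Z) (iota 1 n) = map (fun k : nat => v' k%:Z) (iota 1 n).
  apply: lt_sorted_eq => // x; rewrite !mem_v.
  apply/and4P/and4P => -[a b c d]; split => //.
    by rewrite -/f' -(sgx x a).
  by rewrite -/f (sgx x a).
have V : forall k : nat, (1 <= k <= n)%N -> v k%:Z = v' k%:Z.
  move=> k hk; have := congr1 (fun s => nth 0 s k.-1) E.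
  rewrite /= !(nth_map 0%N) ?size_iota ?nth_iota; try lia.
  by have -> : (1 + k.-1)%N = k by lia.
have VV : forall x, v x = v' x.
  move=> x.
  have [hx|[hx|hx]] : (x = 0 \/ n%:Z < x \/ x < - n%:Z) \/
     (1 <= x <= n%:Z) \/ (- n%:Z <= x <= -1) by lia.
  - by rewrite /v /v' !wout.
  - have -> : x = `|x|%N%:Z by lia.
    by apply: V; lia.
  - have -> : x = - `|x|%N%:Z by lia.
    by rewrite /v /v' !wodd -/v -/v' V //; lia.
move=> j.
rewrite /f -{1}(vf u' j) -/v' -VV /v.
by rewrite fv.
Qed.
End S.


Section F.
Variable n : nat.

Definition ends (M : seq (int * int)) : seq int :=
  flatten [seq [:: ab.1; ab.2] | ab <- M].

Lemma cm_ends M x : all (fun ab : int * int => ab.1 < ab.2) M ->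
  count_mem x (ends M) = count (fun ab : int * int => (ab.1 == x) || (ab.2 == x)) M.
Proof.
elim: M => [|[a1 a2] M IH] //= /andP [/= h hM].
rewrite IH // addnA; congr (_ + _)%N.
case: (eqVneq a1 x) => [<-|ne1] /=.
  by have -> : (a2 == a1) = false by apply/negbTE; apply/eqP; lia.
by rewrite add0n.
Qed.

Lemma neg_ends M : all (fun ab : int * int => (ab.1 < ab.2) && (ab.2 != 0)) M ->
  count (fun y : int => y < 0) (ends M) =
  (count crossing M + 2 * count (fun ab : int * int => (ab.2 < 0)%R) M)%N.
Proof.
elim: M => [|[a1 a2] M IH] //= /andP [/= /andP [h h0] hM].
rewrite IH // /crossing /=.
move/eqP: h0 => h0.
case: (boolP (a1 < 0)); case: (boolP (a2 < 0)); case: (boolP (0 < a2)) => /= ? ? ?; lia.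
Qed.

Definition Plist : seq int :=
  [seq - (k%:Z) | k <- iota 1 (2 * n)] ++ [seq k%:Z | k <- iota 1 (2 * n)].

Lemma mem_Plist x : (x \in Plist) = inP n x.
Proof.
rewrite /Plist /inP mem_cat; apply/orP/idP.
  by case=> /mapP [k]; rewrite mem_iota => hk ->; lia.
move=> h.
have [hp|hn] : 0 < x \/ x < 0 by lia.
  right; apply/mapP; exists `|x|%N; [rewrite mem_iota; lia | lia].
left; apply/mapP; exists `|x|%N; [rewrite mem_iota; lia | lia].
Qed.

Lemma uniq_Plist : uniq Plist.
Proof.
rewrite /Plist cat_uniq !map_inj_uniq ?iota_uniq //=.
- rewrite andbT; apply/negP => /hasP [x /mapP [k hk ->] /mapP [k' hk' e]]; move: hk hk' e.
  rewrite !mem_iota; lia.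
- by move=> a b; lia.
- by move=> a b; lia.
Qed.

Lemma negP_count : count (fun y : int => y < 0) Plist = (2 * n)%N.
Proof.
rewrite /Plist count_cat !count_map.
rewrite (@eq_in_count _ _ predT); last first.
  by move=> k; rewrite mem_iota /= => hk; lia.
rewrite [X in (_ + X)%N](@eq_in_count _ _ pred0 (iota 1 (2 * n))); last first.
  by move=> k; rewrite mem_iota /= => hk; apply/negbTE; lia.
by rewrite count_predT count_pred0 size_iota addn0.
Qed.

Lemma parity_M al M : is_matching n al M -> ~~ odd (count crossing M).
Proof.
move=> [H1 [H2 _]].
have A1 : all (fun ab : int * int => ab.1 < ab.2) M.
  by apply/allP => ab hab; have [] := H1 ab hab.
have A2 : all (fun ab : int * int => (ab.1 < ab.2) && (ab.2 != 0)) M.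
  apply/allP => ab hab; have [h1 h2 h3 _ _] := H1 ab hab.
  by apply/andP; split => //; move: h2; rewrite /inP => /andP [/andP []].
have P : perm_eq (ends M) Plist.
  apply/allP => x _; apply/eqP.
  rewrite cm_ends // count_uniq_mem ?uniq_Plist // mem_Plist.
  case: (boolP (inP n x)) => hx; first by rewrite H2.
  rewrite (@eq_in_count _ _ pred0) ?count_pred0 // => ab hab /=.
  have [h1 h2 _ _ _] := H1 ab hab.
  by apply/negbTE/negP => /orP [/eqP e|/eqP e]; move: hx; rewrite -e ?h1 ?h2.
have := negP_count; rewrite -(permP P) neg_ends // => H.
move/(congr1 odd): H; rewrite oddD !oddM /= => e.
by apply/negP => hc; move: e; rewrite hc.
Qed.

Lemma label_has al M x : is_matching n al M -> inP n x ->
  ext_label n al x = has (fun ab : int * int => ab.1 == x) M.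
Proof.
move=> [H1 [H2 _]] hx.
have : has (fun ab : int * int => (ab.1 == x) || (ab.2 == x)) M by rewrite has_count H2.
move=> /hasP [ab hab /orP [/eqP e|/eqP e]]; have [_ _ _ l1 l2] := H1 ab hab.
  by rewrite -e l1; apply/esym/hasP; exists ab => //; rewrite e.
rewrite -e l2; apply/esym/negP => /hasP [cd hcd /eqP e'].
by have [_ _ _ l1' _] := H1 cd hcd; move: l1'; rewrite e' l2.
Qed.

Lemma label_pos al (k : nat) : (1 <= k <= n)%N -> ext_label n al k%:Z = al k.
Proof.
move=> hk; rewrite /ext_label.
have -> : (k%:Z < - n%:Z) = false by apply/negbTE; lia.
have -> : (n%:Z < k%:Z) = false by apply/negbTE; lia.
by have -> : (0 < k%:Z) = true by apply/idP; lia.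
Qed.

Lemma has_cup M (k : int) : 0 < k ->
  has (fun ab : int * int => ab.1 == k) (cup_diagram M) =
  has (fun ab : int * int => ab.1 == k) M.
Proof.
move=> hk; rewrite /cup_diagram has_cat.
set F := flatten _.
have -> : has (fun ab : int * int => ab.1 == k) F = false.
  apply/negbTE/negP => /hasP [ab /flattenP [s /mapP [j _ ->] hab] /eqP e].
  have ys_pos : forall m, 0 <= nth 0 (ys M) m.
    move=> m; case: (ltnP m (size (ys M))) => hm; last by rewrite nth_default.
    have := mem_nth 0 hm; rewrite /ys mem_sort => /mapP [cd].
    by rewrite mem_filter => /andP [/andP [_ h] _] ->; lia.
  move: hab; rewrite !inE => /orP [/eqP hab|/eqP hab]; rewrite hab /= in e.
    by move: hk; rewrite -e oppr_gt0 => hk; have := ys_pos (2 * j).+1; rewrite leNgt hk.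
  by move: hk; rewrite -e oppr_gt0 => hk; have := ys_pos (2 * j); rewrite leNgt hk.
rewrite orbF; apply/hasP/hasP => -[ab hab e]; exists ab => //.
  by move: hab; rewrite mem_filter => /andP [].
rewrite mem_filter hab andbT /crossing; move/eqP: e => ->.
by apply/negP => /andP [h _]; lia.
Qed.

End F.


Unset Implicit Arguments.

Theorem lemma2p7 (n : nat) (Hn : (4 <= n)%N) :
  (forall (u : seq 'I_n) (M : seq (int * int)),
     in_Wp u -> is_matching n (alpha u) M -> ~~ odd (count crossing M)) /\
  (forall (u v : seq 'I_n) (M M' : seq (int * int)),
     in_Wp u -> in_Wp v ->
     is_matching n (alpha u) M -> is_matching n (alpha v) M' ->
     cup_diagram M =i cup_diagram M' -> wequiv u v).
Proof.
split.
  by move=> u M _ hM; apply: parity_M hM.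
move=> u v M M' hu hv hM hM' hC.
apply: (unique_Wp Hn hu hv) => k hk.
rewrite -(alphaE Hn u k hk) -(alphaE Hn v k hk).
have inPk : inP n k%:Z.
  rewrite /inP; apply/andP; split; [apply/andP; split; [apply/eqP|]|]; lia.
have k0 : 0 < k%:Z by lia.
rewrite -(label_pos n (alpha u) k hk) -(label_pos n (alpha v) k hk).
rewrite (@label_has n _ _ _ hM inPk) (@label_has n _ _ _ hM' inPk).
rewrite -(@has_cup M _ k0) -(@has_cup M' _ k0).
exact: (eq_has_r hC).
Qed.
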